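(* Let $t\geq 2$ and let $q\geq 4$ be a prime power. If $M^{(t)}_{2t\times t}(F_q)\neq\emptyset$, then there exists a $q^t$-CMS$(q^t,t)$.
   Context: $M^{(t)}_{k\times s}(F_q)$ denotes the set of $k\times s$ matrices over the finite field $F_q$ in which any $t$ rows are linearly independent. An MS$(n,t)$ is an $n\times n$ matrix with entries $0,\dots,n^2-1$ such that for each $e=1,\dots,t$ the entrywise $e$-th power has all row sums, column sums, main-diagonal sum and back-diagonal sum (entries $(i,n-1-i)$) equal. With $S_e(n)=\frac1n\sum_{k=0}^{n^2-1}k^e$, a family $\{B_0,\dots,B_{m-1}\}$ of MS$(n,t)$s, $B_s=(b^{(s)}_{i,j})$, $i,j\in\{0,\dots,n-1\}$, is an $m$-CMS$(n,t)$ if $\sum_{s}\sum_{j}(b^{(s)}_{i,j})^{t+1}=mS_{t+1}(n)$ for every $i$, $\sum_{s}\sum_{i}(b^{(s)}_{i,j})^{t+1}=mS_{t+1}(n)$ for every $j$, and $\sum_s\sum_i(b^{(s)}_{i,i})^{t+1}=\sum_s\sum_i(b^{(s)}_{i,n-1-i})^{t+1}=mS_{t+1}(n)$. *)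

(* Defs.v *)
From HB Require Import structures.
From mathcomp Require Import all_boot all_order all_algebra all_field.
Set Implicit Arguments. Unset Strict Implicit. Unset Printing Implicit Defensive.

Definition any_t_rows_indep (F : fieldType) (k s t : nat) (A : 'M[F]_(k, s)) :=
  forall f : 'I_t -> 'I_k, injective f -> row_free (rowsub f A).

(* n * S_e(n) = sum_{k < n^2} k^e  (we avoid the division by n) *)
Definition nS (e n : nat) : nat := \sum_(k < n ^ 2) k ^ e.

Definition entries_ok (n : nat) (B : 'M[nat]_n) :=
  (forall i j, B i j < n ^ 2) /\
  (forall i j i' j', B i j = B i' j' -> i = i' /\ j = j').

Definition row_pow_sum n (B : 'M[nat]_n) e (i : 'I_n) := \sum_(j < n) B i j ^ e.
Definition col_pow_sum n (B : 'M[nat]_n) e (j : 'I_n) := \sum_(i < n) B i j ^ e.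
Definition diag_pow_sum n (B : 'M[nat]_n) e := \sum_(i < n) B i i ^ e.
Definition bdiag_pow_sum n (B : 'M[nat]_n) e := \sum_(i < n) B i (rev_ord i) ^ e.

Definition MS (n t : nat) (B : 'M[nat]_n) :=
  entries_ok B /\
  forall e, 1 <= e <= t ->
    exists c, (forall i, row_pow_sum B e i = c) /\ (forall j, col_pow_sum B e j = c)
              /\ diag_pow_sum B e = c /\ bdiag_pow_sum B e = c.

(* m-CMS(n,t): family B_0..B_{m-1} of (distinct) MS(n,t)s with the
   (t+1)-th power compound conditions, multiplied through by n. *)
Definition CMS (m n t : nat) (B : 'I_m -> 'M[nat]_n) :=
  injective B /\ (forall s, MS t (B s)) /\
  (forall i : 'I_n, n * (\sum_(s < m) row_pow_sum (B s) t.+1 i) = m * nS t.+1 n) /\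
  (forall j : 'I_n, n * (\sum_(s < m) col_pow_sum (B s) t.+1 j) = m * nS t.+1 n) /\
  n * (\sum_(s < m) diag_pow_sum (B s) t.+1) = m * nS t.+1 n /\
  n * (\sum_(s < m) bdiag_pow_sum (B s) t.+1) = m * nS t.+1 n.

(* Main.v *)
Require Import Defs.
From HB Require Import structures.
From mathcomp Require Import all_boot all_order all_algebra all_field.
From mathcomp Require Import zify.
Set Implicit Arguments. Unset Strict Implicit. Unset Printing Implicit Defensive.
Import GRing.Theory.
From mathcomp Require Import ring.

Lemma sum_bij (X Y : finType) (g : X -> Y) (h : Y -> nat) :
  injective g -> #|Y| <= #|X| -> \sum_x h (g x) = \sum_y h y.
Proof.
move=> gi c; rewrite (reindex g) //=; exact: onW_bij (inj_card_bij gi c).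
Qed.

Lemma expand_pow (m e : nat) (a : 'I_m -> nat) :
  (\sum_(k < m) a k) ^ e = \sum_(kk : {ffun 'I_e -> 'I_m}) \prod_(i < e) a (kk i).
Proof.
have -> : forall x, x ^ e = \prod_(i < e) x by move=> x; rewrite prod_nat_const card_ord.
have := (bigA_distr_bigA (fun (i : 'I_e) (k : 'I_m) => a k)).
by move=> /= ->.
Qed.

Lemma extend_set (T : finType) (K : {set T}) m :
  #|K| <= m <= #|T| -> exists K' : {set T}, K \subset K' /\ #|K'| = m.
Proof.
move=> /andP[h1 h2]; move: {2}(m - #|K|) (erefl (m - #|K|)) => d.
elim: d K h1 => [|d IH] K h1 hd.
  by exists K; split => //; lia.
have : #|~: K| > 0 by rewrite cardsCs setCK; lia.
case/card_gt0P => x; rewrite inE => xK.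
have [K' [s1 s2]] := IH (x |: K) ltac:(rewrite cardsU1 xK /=; lia)
                            ltac:(rewrite cardsU1 xK /=; lia).
exists K'; split => //; apply: subset_trans s1; exact: subsetUr.
Qed.

Lemma factor_map (m e t : nat) (kk : 'I_e -> 'I_m) :
  e <= t <= m -> exists f : 'I_t -> 'I_m, injective f /\
     exists l : 'I_e -> 'I_t, forall i, kk i = f (l i).
Proof.
move=> /andP[h1 h2].
have c0 : #|[set kk i | i in 'I_e]| <= t.
  by apply: leq_trans (leq_imset_card _ _) _; rewrite card_ord.
have [K [sK cK]] := @extend_set _ [set kk i | i in 'I_e] t
   ltac:(rewrite c0 card_ord h2 //).
have kK i : kk i \in K by apply: (subsetP sK); apply: imset_f.
exists (fun i => enum_val (cast_ord (esym cK) i)); split.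
  by move=> i j /enum_val_inj /cast_ord_inj.
exists (fun i => cast_ord cK (enum_rank_in (kK i) (kk i))) => i.
by rewrite cast_ordK enum_rankK_in.
Qed.

Section Digits.
Variable q : nat.
Hypothesis q0 : 0 < q.

Lemma digits_lt m (a : 'I_m -> nat) : (forall k, a k < q) ->
  \sum_(k < m) a k * q ^ k < q ^ m.
Proof.
elim: m a => [|m IH] a ha; first by rewrite big_ord0.
rewrite big_ord_recl /= expn0 muln1.
under eq_bigr do rewrite /bump /= add1n expnS mulnCA.
rewrite -big_distrr /=.
have := IH (fun k => a (lift ord0 k)) (fun k => ha _).
have := ha ord0; rewrite expnS; move: (a ord0) (\sum_(k < m) _) (q ^ m) => x S Q h1 h2; nia.
Qed.

Lemma digits_inj m (a b : 'I_m -> nat) : (forall k, a k < q) -> (forall k, b k < q) ->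
  \sum_(k < m) a k * q ^ k = \sum_(k < m) b k * q ^ k -> forall k, a k = b k.
Proof.
elim: m a b => [|m IH] a b ha hb; first by move=> _ [].
rewrite !big_ord_recl /= !expn0 !muln1.
under eq_bigr do rewrite /bump /= add1n expnS mulnCA.
under [X in _ = _ + X]eq_bigr do rewrite /bump /= add1n expnS mulnCA.
rewrite -!big_distrr /=.
rewrite addnC [b ord0 + _]addnC !(mulnC q) => E.
have E1 : a ord0 = b ord0.
  by have := congr1 (modn^~ q) E; rewrite /= !modnMDl !modn_small.
have E2 := congr1 (divn^~ q) E.
rewrite /= !divnMDl // !divn_small // !addn0 in E2.
have := IH _ _ (fun k => ha _) (fun k => hb _) E2.
move=> H k; case: (unliftP ord0 k) => [j ->|->] //; exact: H.
Qed.
End Digits.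
Lemma set_bij (X Y : finType) (A : {set X}) (B : {set Y}) (y0 : Y) :
  #|A| = #|B| -> exists phi : X -> Y, {in A &, injective phi} /\ {in A, forall x, phi x \in B}.
Proof.
move=> cAB; exists (fun x => nth y0 (enum B) (index x (enum A))).
have hi x : x \in A -> index x (enum A) < size (enum B).
  by move=> xA; rewrite -cardE -cAB cardE index_mem mem_enum.
split.
  move=> x x' xA x'A /eqP; rewrite nth_uniq ?hi ?enum_uniq // => /eqP E.
  by rewrite -(nth_index x (_ : x \in enum A)) ?mem_enum // E nth_index // mem_enum.
by move=> x xA; rewrite -mem_enum mem_nth ?hi.
Qed.

Section Inv.
Variables (X : finType) (s : X -> X).
Hypothesis sK : involutive s.
Definition rk (x : X) : nat := enum_rank x.
Definition HS := [set x | rk x < rk (s x)].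
Definition FS := [set x | s x == x].
Definition LS := [set x | rk (s x) < rk x].

Lemma rk_eq x y : (rk x == rk y) = (x == y).
Proof. by rewrite /rk val_eqE (inj_eq enum_rank_inj). Qed.

Lemma LS_pre : LS = s @^-1: HS.
Proof. by apply/setP => x; rewrite !inE sK. Qed.

Lemma card_inv : #|X| = 2 * #|HS| + #|FS|.
Proof.
have sI : injective s := inv_inj sK.
rewrite -(cardsC HS) -(cardsID FS (~: HS)).
have -> : ~: HS :&: FS = FS.
  apply/setP => x; rewrite !inE; case: eqP => [->|]; by rewrite ?andbF ?ltnn.
have -> : ~: HS :\: FS = LS.
  apply/setP => x; rewrite !inE -rk_eq eq_sym.
  by case: (ltngtP (rk x) (rk (s x))).
by rewrite LS_pre card_preimset //; lia.
Qed.

Lemma region x : [\/ x \in HS /\ x \notin FS /\ s x \notin HS,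
                    x \in FS /\ x \notin HS /\ s x = x |
                    s x \in HS /\ x \notin HS /\ x \notin FS].
Proof.
rewrite !inE sK -(rk_eq (s x)).
case: (ltngtP (rk x) (rk (s x))) => h.
- by constructor 1; repeat split; lia.
- by constructor 3; repeat split; lia.
- constructor 2; repeat split; try lia; by apply/eqP; rewrite -rk_eq h.
Qed.
End Inv.

Lemma conj_bij (X Y : finType) (s : X -> X) (r : Y -> Y) (y0 : Y) :
  involutive s -> involutive r -> #|X| = #|Y| ->
  #|FS s| <= 1 -> #|FS r| <= 1 ->
  exists io : X -> Y, injective io /\ forall x, io (s x) = r (io x).
Proof.
move=> sK rK cXY f1 f2.
have cX := card_inv sK; have cY := card_inv rK.
have cF : #|FS s| = #|FS r| by lia.
have cH : #|HS s| = #|HS r| by lia.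
have [ph [phI phB]] := set_bij y0 cH.
have [pf [pfI pfB]] := set_bij y0 cF.
pose io x := if x \in HS s then ph x else if x \in FS s then pf x else r (ph (s x)).
exists io.
pose rY y := ((y \in HS r) + 2 * (y \in FS r))%N.
have reg x : [\/ [/\ x \in HS s, io x = ph x & rY (io x) = 1%N],
              [/\ x \in FS s, io x = pf x & rY (io x) = 2%N] |
              [/\ s x \in HS s, io x = r (ph (s x)) & rY (io x) = 0%N]].
  rewrite /io; case: (region sK x) => [[h1 [h2 h3]]|[h1 [h2 h3]]|[h1 [h2 h3]]].
  - rewrite h1; constructor 1; split => //; have := phB _ h1.
    case: (region rK (ph x)) => [[k1 [k2 k3]]|[k1 [k2 k3]]|[k1 [k2 k3]]] => k;
      by rewrite /rY ?k ?k1 ?(negbTE k2) ?(negbTE k3) //; rewrite k in k2.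
  - rewrite (negbTE h2) h1; constructor 2; split => //; have := pfB _ h1.
    case: (region rK (pf x)) => [[k1 [k2 k3]]|[k1 [k2 k3]]|[k1 [k2 k3]]] => k;
      by rewrite /rY ?k ?k1 ?(negbTE k2) ?(negbTE k3) //; rewrite k in k2.
  - rewrite (negbTE h2) (negbTE h3); constructor 3; split => //; have := phB _ h1.
    move=> k; case: (region rK (r (ph (s x)))) => [[k1 [k2 k3]]|[k1 [k2 k3]]|[k1 [k2 k3]]].
    + by rewrite rK k in k3.
    + by rewrite rK in k3; rewrite -k3 k in k2.
    + by rewrite /rY (negbTE k2) (negbTE k3).
split.
  move=> x x' E.
  case: (reg x) => [[a1 a2 a3]|[a1 a2 a3]|[a1 a2 a3]];
  case: (reg x') => [[b1 b2 b3]|[b1 b2 b3]|[b1 b2 b3]];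
  rewrite -?E a3 in b3 => //.
  - by apply: (phI _ _ a1 b1); rewrite -a2 -b2.
  - by apply: (pfI _ _ a1 b1); rewrite -a2 -b2.
  - by apply: (inv_inj sK); apply: (phI _ _ a1 b1); apply: (inv_inj rK); rewrite -a2 -b2.
move=> x; case: (reg x) => [[a1 a2 a3]|[a1 a2 a3]|[a1 a2 a3]].
- case: (region sK x) => [[h1 [h2 h3]]|[h1 [h2 h3]]|[h1 [h2 h3]]]; last first.
  + by rewrite a1 in h2.
  + by rewrite a1 in h2.
  rewrite /io (negbTE h3) a1.
  have -> : (s x \in FS s) = false.
    by apply/negbTE; rewrite !inE sK eq_sym; rewrite inE in h2.
  by rewrite sK.
- move: a1; rewrite inE => /eqP ->.
  move: a3; rewrite /rY; case: (io x \in HS r); case E: (io x \in FS r) => //= _.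
  by move: E; rewrite inE => /eqP.
- case: (region sK x) => [[h1 [h2 h3]]|[h1 [h2 h3]]|[h1 [h2 h3]]].
  + by rewrite a1 in h3.
  + by rewrite h3 in a1; rewrite a1 in h2.
  by rewrite a2 rK /io a1.
Qed.

Section Main.
Variables (t : nat) (F : finFieldType) (A : 'M[F]_(2 * t, t)).
Hypothesis t2 : 2 <= t.
Hypothesis hA : forall f : 'I_t -> 'I_(2 * t), injective f -> row_free (rowsub f A).

Local Notation q := #|F|.
Local Notation V := 'cV[F]_(2 * t).

Lemma q0 : 0 < q.
Proof. by apply/card_gt0P; exists 0%R. Qed.

Definition tau (x : F) : nat := enum_rank x.
Lemma tau_lt x : tau x < q.
Proof. rewrite /tau; exact: ltn_ord. Qed.

Definition val (w : V) : nat := \sum_(k < 2 * t) tau (w k ord0) * q ^ k.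

Lemma val_lt w : val w < (q ^ t) ^ 2.
Proof.
rewrite -expnM mulnC; apply: (digits_lt q0) => k; exact: tau_lt.
Qed.

Lemma valw_inj : injective val.
Proof.
move=> w w' E; apply/matrixP => k j; rewrite (ord1 j).
have := digits_inj q0 (fun k => tau_lt _) (fun k => tau_lt _) E k.
by move/val_inj/enum_rank_inj.
Qed.

Definition goodmap (X : finType) (g : X -> V) :=
  forall f : 'I_t -> 'I_(2 * t), injective f -> injective (fun x => rowsub f (g x)).

Lemma card_cV k : #|{: 'cV[F]_k}| = q ^ k.
Proof. by rewrite card_mx muln1. Qed.

Lemma key_one (Y : finType) (h : Y -> V) e (kk : {ffun 'I_e -> 'I_(2 * t)})
   (f : 'I_t -> 'I_(2 * t)) (l : 'I_e -> 'I_t) :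
  (forall i, kk i = f (l i)) -> injective f -> goodmap h -> #|Y| = q ^ t ->
  \sum_y \prod_(i < e) (tau (h y (kk i) ord0) * q ^ kk i) =
  \sum_(z : 'cV[F]_t) \prod_(i < e) (tau (z (l i) ord0) * q ^ f (l i)).
Proof.
move=> hl fI hg cY.
transitivity (\sum_y (fun z : 'cV[F]_t => \prod_(i < e) (tau (z (l i) ord0) * q ^ f (l i)))
                 (rowsub f (h y))).
  by apply: eq_bigr => y _; apply: eq_bigr => i _; rewrite hl !mxE.
by apply: sum_bij; [exact: hg | rewrite card_cV cY].
Qed.

Lemma key (X X' : finType) (g : X -> V) (g' : X' -> V) e :
  e <= t -> #|X| = q ^ t -> #|X'| = q ^ t -> goodmap g -> goodmap g' ->
  \sum_x val (g x) ^ e = \sum_x val (g' x) ^ e.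
Proof.
move=> et cX cX' hg hg'; rewrite /val.
under eq_bigr do rewrite expand_pow.
under [RHS]eq_bigr do rewrite expand_pow.
rewrite exchange_big [RHS]exchange_big; apply: eq_bigr => kk _.
have [f [fI [l hl]]] := @factor_map (2 * t) e t kk ltac:(rewrite et /=; lia).
by rewrite (key_one hl fI hg cX) (key_one hl fI hg' cX').
Qed.

Lemma full (X : finType) (g : X -> V) e :
  injective g -> #|X| = (q ^ t) ^ 2 -> \sum_x val (g x) ^ e = nS e (q ^ t).
Proof.
move=> gI cX.
rewrite (@sum_bij _ _ g (fun w => val w ^ e)) //; last by rewrite cX card_cV -expnM mulnC.
rewrite /nS.
rewrite -(@sum_bij _ _ (fun w => Ordinal (val_lt w)) (fun k : 'I_((q ^ t) ^ 2) => k ^ e)) //.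
  by move=> w w' /(congr1 (@nat_of_ord _)) /valw_inj.
by rewrite card_ord card_cV -expnM mulnC.
Qed.

Local Open Scope ring_scope.
Definition good (M : 'M[F]_(2 * t, t)) :=
  forall f : 'I_t -> 'I_(2 * t), injective f -> rowsub f M \in unitmx.

Lemma goodA : good A.
Proof. by move=> f fI; rewrite -row_free_unit; apply: hA. Qed.

Definition scl (d : 'I_(2 * t) -> F) (M : 'M[F]_(2 * t, t)) :=
  \matrix_(k, l) (d k * M k l).

Lemma good_scl d : (forall k, d k != 0) -> good (scl d A).
Proof.
move=> dn f fI.
have -> : rowsub f (scl d A) = diag_mx (\row_i d (f i)) *m rowsub f A.
  by rewrite mul_diag_mx; apply/matrixP => i j; rewrite !mxE.
rewrite unitmx_mul goodA // andbT unitmxE det_diag unitfE.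
by apply/prodf_neq0 => i _; rewrite mxE.
Qed.

Lemma rowsubD m (f : 'I_m -> 'I_(2 * t)) (a b : V) :
  rowsub f (a + b) = rowsub f a + rowsub f b.
Proof. by apply/matrixP => i j; rewrite !mxE. Qed.

Lemma goodmap_lin (X : finType) (M : 'M[F]_(2 * t, t)) (phi : X -> 'cV[F]_t) w0 :
  good M -> injective phi -> goodmap (fun x => M *m phi x + w0).
Proof.
move=> gM pI f fI x x' /=; rewrite !rowsubD -!mul_rowsub_mx => /addIr E.
by apply: pI; rewrite -(mulKmx (gM f fI) (phi x)) E mulKmx // gM.
Qed.

Lemma tt2 : (t <= 2 * t)%N. Proof. lia. Qed.
Definition f0 (k : 'I_t) : 'I_(2 * t) := widen_ord tt2 k.
Lemma f1_lt (k : 'I_t) : (t + k < 2 * t)%N. Proof. have := ltn_ord k; lia. Qed.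
Definition f1 (k : 'I_t) : 'I_(2 * t) := Ordinal (f1_lt k).
Lemma f0_inj : injective f0.
Proof. by move=> i j /(congr1 (@nat_of_ord _)) /= /val_inj. Qed.
Lemma f1_inj : injective f1.
Proof. move=> i j /(congr1 (@nat_of_ord _)) /= /eqP; rewrite eqn_add2l => /eqP; exact: val_inj. Qed.

Definition S : 'M[F]_(2 * t, t) := \matrix_(k, l) ((k : nat) == t + l)%:R.

Lemma S0 : rowsub f0 S = 0.
Proof.
apply/matrixP => i j; rewrite !mxE /=.
by have := ltn_ord i; case: eqP => // ->; lia.
Qed.

Lemma S1 : rowsub f1 S = 1%:M.
Proof. by apply/matrixP => i j; rewrite !mxE /= eqn_add2l. Qed.

Lemma comp_inj (X Y : finType) (M : 'M[F]_(2 * t, t)) (phi : X -> 'cV[F]_t)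
   (io : Y -> 'cV[F]_t) w0 :
  good M -> injective phi -> injective io ->
  injective (fun p : Y * X => M *m phi p.2 + S *m io p.1 + w0).
Proof.
move=> gM pI iI [b a] [b' a'] /= /addIr E.
have E0 := congr1 (rowsub f0) E; rewrite !rowsubD -!mul_rowsub_mx S0 !mul0mx !addr0 in E0.
have ea : a = a'.
  apply: pI; have hu := gM f0 f0_inj.
  by have := congr1 (mulmx (invmx (rowsub f0 M))) E0; rewrite !mulKmx.
rewrite ea in E; move/addrI: E => E.
have E1 := congr1 (rowsub f1) E; rewrite -!mul_rowsub_mx S1 !mul1mx in E1.
by rewrite ea (iI _ _ E1).
Qed.

Lemma cancel_unit (R : 'M[F]_t) (x y : 'cV[F]_t) : R \in unitmx -> R *m x = R *m y -> x = y.
Proof. by move=> hu E; have := congr1 (mulmx (invmx R)) E; rewrite !mulKmx. Qed.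

Variable lam : F.
Hypotheses (l0 : lam != 0) (l1 : lam != 1) (lm1 : lam != -1).
Variables (io : 'I_(q ^ t) -> 'cV[F]_t) (c : 'cV[F]_t).
Hypotheses (ioI : injective io) (ioR : forall i, io (rev_ord i) = c - io i).

Definition d (k : 'I_(2 * t)) : F := if (k < t)%N then lam else lam^-1.
Definition Q := scl d A.

Lemma li0 : lam^-1 != 0. Proof. by rewrite invr_eq0. Qed.
Lemma li1 : lam^-1 != 1. Proof. by rewrite invr_eq1. Qed.
Lemma lim1 : lam^-1 != -1.
Proof. by apply: contra lm1 => /eqP E; rewrite -[lam]invrK E invrN1. Qed.
Lemma lli : lam != lam^-1.
Proof.
apply/negP => /eqP E.
have : lam ^+ 2 == 1 by rewrite expr2 {2}E mulfV.
by rewrite sqrf_eq1 (negbTE l1) (negbTE lm1).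
Qed.

Lemma d0 k : d k != 0. Proof. rewrite /d; case: ifP => _; [exact: l0 | exact: li0]. Qed.
Lemma dP k : 1 + d k != 0.
Proof.
rewrite /d addrC addr_eq0; case: ifP => _; [exact: lm1 | exact: lim1].
Qed.
Lemma dM k : 1 - d k != 0.
Proof.
rewrite /d subr_eq0 eq_sym; case: ifP => _; [exact: l1 | exact: li1].
Qed.

Lemma goodQ : good Q. Proof. exact: good_scl d0. Qed.
Lemma goodP : good (scl (fun k => 1 + d k) A). Proof. exact: good_scl dP. Qed.
Lemma goodM : good (scl (fun k => 1 - d k) A). Proof. exact: good_scl dM. Qed.
Lemma goodA' : good (scl (fun k => 1) A).
Proof. by apply: good_scl => k; exact: oner_neq0. Qed.

Lemma sclP : A + Q = scl (fun k => 1 + d k) A.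
Proof. by apply/matrixP => i j; rewrite !mxE mulrDl mul1r. Qed.
Lemma sclM : A - Q = scl (fun k => 1 - d k) A.
Proof. by apply/matrixP => i j; rewrite !mxE mulrBl mul1r. Qed.

Lemma Q0 : rowsub f0 Q = lam *: rowsub f0 A.
Proof.
apply/matrixP => i j; rewrite !mxE /d /=.
by have := ltn_ord i; case: ltnP.
Qed.
Lemma Q1 : rowsub f1 Q = lam^-1 *: rowsub f1 A.
Proof.
apply/matrixP => i j; rewrite !mxE /d /=.
by case: ltnP => //; lia.
Qed.

Definition E (s i j : 'I_(q ^ t)) : V := A *m io i + Q *m io j + S *m io s.
Definition B (s : 'I_(q ^ t)) : 'M[nat]_(q ^ t) := \matrix_(i, j) val (E s i j).

Lemma lin2 (x y x' y' a b : F) : a != b -> x + a * y = x' + a * y' ->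
  x + b * y = x' + b * y' -> x = x' /\ y = y'.
Proof.
move=> ab e1 e2.
have H : (a - b) * (y - y') = (x + a * y - (x' + a * y')) - (x + b * y - (x' + b * y')) by ring.
rewrite e1 e2 !subrr in H.
move/eqP: H; rewrite mulf_eq0 subr_eq0 (negbTE ab) /= subr_eq0 => /eqP yy.
by split => //; rewrite yy in e1; apply: (addIr _ e1).
Qed.

Lemma E_inj s i j i' j' : E s i j = E s i' j' -> i = i' /\ j = j'.
Proof.
rewrite /E => /addIr E0.
have e0 := congr1 (rowsub f0) E0; have e1 := congr1 (rowsub f1) E0.
rewrite !rowsubD -!mul_rowsub_mx Q0 -!scalemxAl !scalemxAr -!mulmxDr in e0.
rewrite !rowsubD -!mul_rowsub_mx Q1 -!scalemxAl !scalemxAr -!mulmxDr in e1.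
move/cancel_unit: e0 => /(_ (goodA f0_inj)) e0.
move/cancel_unit: e1 => /(_ (goodA f1_inj)) e1.
have ev : io i = io i' /\ io j = io j'.
  suff H : forall k, io i k ord0 = io i' k ord0 /\ io j k ord0 = io j' k ord0.
    by split; apply/matrixP => k l; rewrite (ord1 l); case: (H k).
  move=> k; apply: (lin2 lli).
    by have := congr1 (fun m : 'cV[F]_t => m k ord0) e0; rewrite /= !mxE.
  by have := congr1 (fun m : 'cV[F]_t => m k ord0) e1; rewrite /= !mxE.
by case: ev => /ioI -> /ioI ->.
Qed.

Lemma ErowE s i j : E s i j = Q *m io j + (A *m io i + S *m io s).
Proof. by rewrite /E [A *m _ + _]addrC -addrA. Qed.
Lemma EcolE s i j : E s i j = A *m io i + (Q *m io j + S *m io s).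
Proof. by rewrite /E -addrA. Qed.
Lemma EdiagE s i : E s i i = scl (fun k => 1 + d k) A *m io i + S *m io s.
Proof. by rewrite /E -mulmxDl sclP. Qed.
Lemma EbdiagE s i : E s i (rev_ord i) =
  scl (fun k => 1 - d k) A *m io i + (Q *m c + S *m io s).
Proof.
rewrite /E ioR mulmxBr -sclM mulmxBl -!addrA; congr (_ + _).
exact: addrCA.
Qed.
Lemma Erow2 s i j : E s i j = Q *m io j + S *m io s + A *m io i.
Proof. by rewrite ErowE [A *m _ + _]addrC addrA. Qed.
Lemma Ecol2 s i j : E s i j = A *m io i + S *m io s + Q *m io j.
Proof. by rewrite /E addrAC. Qed.
Lemma Ediag2 s i : E s i i = scl (fun k => 1 + d k) A *m io i + S *m io s + 0.
Proof. by rewrite addr0 EdiagE. Qed.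
Lemma Ebdiag2 s i : E s i (rev_ord i) =
  scl (fun k => 1 - d k) A *m io i + S *m io s + Q *m c.
Proof. by rewrite EbdiagE [Q *m c + _]addrC addrA. Qed.


Local Close Scope ring_scope.
Lemma B_MS s : MS t (B s).
Proof.
split.
  split => [i j|i j i' j']; rewrite !mxE; first exact: val_lt.
  by move/valw_inj/E_inj.
move=> e /andP[e1 et].
have cn : #|{: 'I_(q ^ t)}| = q ^ t := card_ord _.
have gref : goodmap (fun x : 'I_(q ^ t) => (A *m io x + 0)%R) := goodmap_lin (w0 := 0%R) goodA ioI.
exists (\sum_x val (A *m io x + 0)%R ^ e); split; [|split; [|split]].
- move=> i; rewrite /row_pow_sum.
  transitivity (\sum_j val (Q *m io j + (A *m io i + S *m io s))%R ^ e).
    by apply: eq_bigr => j _; rewrite mxE ErowE.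
  by apply: key => //; exact: goodmap_lin goodQ ioI.
- move=> j; rewrite /col_pow_sum.
  transitivity (\sum_i val (A *m io i + (Q *m io j + S *m io s))%R ^ e).
    by apply: eq_bigr => i _; rewrite mxE EcolE.
  by apply: key => //; exact: goodmap_lin goodA ioI.
- rewrite /diag_pow_sum.
  transitivity (\sum_i val (scl (fun k => 1 + d k) A *m io i + S *m io s)%R ^ e).
    by apply: eq_bigr => i _; rewrite mxE EdiagE.
  by apply: key => //; exact: goodmap_lin goodP ioI.
- rewrite /bdiag_pow_sum.
  transitivity (\sum_i val (scl (fun k => 1 - d k) A *m io i + (Q *m c + S *m io s))%R ^ e).
    by apply: eq_bigr => i _; rewrite mxE EbdiagE.
  by apply: key => //; exact: goodmap_lin goodM ioI.
Qed.

Lemma B_CMS : CMS t B.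
Proof.
have cp : #|{: 'I_(q ^ t) * 'I_(q ^ t)}| = (q ^ t) ^ 2 by rewrite card_prod card_ord.
split.
  move=> s s' /(congr1 (fun M : 'M[nat]_(q ^ t) => M s s)); rewrite !mxE.
  move/valw_inj; rewrite /E => /addrI h.
  by have := congr1 (rowsub f1) h; rewrite -!mul_rowsub_mx S1 !mul1mx => /ioI.
split; first exact: B_MS.
split.
  move=> i; congr (_ * _); rewrite /row_pow_sum.
  under eq_bigr do under eq_bigr do rewrite mxE.
  rewrite pair_bigA /=.
  transitivity (\sum_p val (Q *m io p.2 + S *m io p.1 + A *m io i)%R ^ t.+1).
    by apply: eq_bigr => p _; rewrite Erow2.
  by apply: full => //; exact: comp_inj goodQ ioI ioI.
split.
  move=> j; congr (_ * _); rewrite /col_pow_sum.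
  under eq_bigr do under eq_bigr do rewrite mxE.
  rewrite pair_bigA /=.
  transitivity (\sum_p val (A *m io p.2 + S *m io p.1 + Q *m io j)%R ^ t.+1).
    by apply: eq_bigr => p _; rewrite Ecol2.
  by apply: full => //; exact: comp_inj goodA ioI ioI.
split.
  congr (_ * _); rewrite /diag_pow_sum.
  under eq_bigr do under eq_bigr do rewrite mxE.
  rewrite pair_bigA /=.
  transitivity (\sum_p val (scl (fun k => 1 + d k) A *m io p.2 + S *m io p.1 + 0)%R ^ t.+1).
    by apply: eq_bigr => p _; rewrite Ediag2.
  by apply: full => //; exact: comp_inj goodP ioI ioI.
congr (_ * _); rewrite /bdiag_pow_sum.
under eq_bigr do under eq_bigr do rewrite mxE.
rewrite pair_bigA /=.
transitivity (\sum_p val (scl (fun k => 1 - d k) A *m io p.2 + S *m io p.1 + Q *m c)%R ^ t.+1).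
  by apply: eq_bigr => p _; rewrite Ebdiag2.
by apply: full => //; exact: comp_inj goodM ioI ioI.
Qed.

End Main.

Theorem lemma3p4 (t : nat) (F : finFieldType) :
  2 <= t -> 4 <= #|F| ->
  (exists A : 'M[F]_(2 * t, t), any_t_rows_indep t A) ->
  exists B : 'I_(#|F| ^ t) -> 'M[nat]_(#|F| ^ t), CMS t B.
Proof.
move=> t2 q4 [A hA].
have [lam hl] : exists lam : F, lam \notin [:: 0%R; 1%R; (-1)%R].
  set s := [:: (0 : F)%R; 1%R; (-1)%R].
  case: (boolP [exists x, x \notin s]) => [/existsP[x hx]|h]; first by exists x.
  have : #|F| <= #|s|.
    apply: subset_leq_card; apply/subsetP => x _.
    by move: h; rewrite negb_exists => /forallP/(_ x); rewrite negbK.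
  have := card_size s; move=> h1 h2; have := leq_ltn_trans (leq_trans h2 h1) q4; by rewrite ltnn.
move: hl; rewrite !inE !negb_or => /and3P[l0 l1 lm1].
have t0 : 0 < t by lia.
pose c : 'cV[F]_t := const_mx 1%R.
have f1 : #|FS (@rev_ord (#|F| ^ t))| <= 1.
  apply/card_le1_eqP => x y; rewrite !inE => /eqP hx /eqP hy.
  apply/val_inj; move: (congr1 (@nat_of_ord _) hx) (congr1 (@nat_of_ord _) hy) => /=.
  have := ltn_ord x; have := ltn_ord y; lia.
have f2 : #|FS (fun y : 'cV[F]_t => (c - y)%R)| <= 1.
  apply/card_le1_eqP => x y; rewrite !inE => /eqP hx /eqP hy.
  have cx : c = (x *+ 2)%R by rewrite mulr2n -{1}hx subrK.
  have cy : c = (y *+ 2)%R by rewrite mulr2n -{1}hy subrK.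
  have : ((2%:R : F) *: (y - x) == 0)%R by rewrite scalerBr !scaler_nat -cx -cy subrr.
  rewrite scaler_eq0 subr_eq0 => /orP[h2|/eqP //].
  have : c (Ordinal t0) ord0 = 0%R.
    by rewrite cx -scaler_nat (eqP h2) scale0r mxE.
  by rewrite mxE => /eqP; rewrite oner_eq0.
have [io [ioI ioR]] := @conj_bij _ _ (@rev_ord (#|F| ^ t)) (fun y : 'cV[F]_t => (c - y)%R) 0%R
  rev_ordK (GRing.subKr c) ltac:(by rewrite card_ord card_mx muln1) f1 f2.
exists (B A lam io); exact: (B_CMS t2 hA l0 l1 lm1 ioI ioR).
Qed.
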